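(* Let $\mathbb{X}=\{T,F\}$, $n\ge1$, and for $i=1,\dots,n$ let $m_i$ be a mass function on $\mathbb{X}_i=\mathbb{X}$ with belief function $Bel_{\mathbb{X}_i}$. Let $m$ be the mass function of the disjunctive combination of the vacuous extensions of $Bel_{\mathbb{X}_1},\dots,Bel_{\mathbb{X}_n}$ to $\mathbb{X}_1\times\cdots\times\mathbb{X}_n$. Then for every tuple $(x_1,\dots,x_n)$ with $x_i\in\mathbb{X}$, \[ m\big(\{(x_1,\dots,x_n)\}^c\big)=\prod_{i=1}^n m_i(\{x_i\}^c), \] $m(\mathbb{X}_1\times\cdots\times\mathbb{X}_n)=1-\sum_{(x_1,\dots,x_n)}\prod_{i=1}^n m_i(\{x_i\}^c)$, and $m$ vanishes on all other subsets. In particular, when every $m_i$ gives positive mass to $\{T\}$, $\{F\}$ and $\mathbb{X}$, the combination has exactly $2^n+1$ focal elements: the $2^n$ complements of singletons of $\mathbb{X}_1\times\cdots\times\mathbb{X}_n$ and the whole product.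
   Context: Mass function on a finite set $\Theta$: $m:2^\Theta\to[0,1]$ with $m(\emptyset)=0$ and $\sum_A m(A)=1$; focal elements are sets of positive mass; $Bel(A)=\sum_{B\subseteq A}m(B)$. Disjunctive combination: $m_{\cup}(A)=\sum_{B\cup C=A}m_1(B)m_2(C)$, extended associatively to $n$ arguments. Complements $\{x_i\}^c$ are taken in $\mathbb{X}$ and $\{(x_1,\dots,x_n)\}^c$ in $\mathbb{X}_1\times\cdots\times\mathbb{X}_n$. Vacuous extension of $m_i$ to $\mathbb{X}_1\times\cdots\times\mathbb{X}_n$: mass $m_i(B)$ on $\mathbb{X}_1\times\cdots\times\mathbb{X}_{i-1}\times B\times\mathbb{X}_{i+1}\times\cdots\times\mathbb{X}_n$, zero elsewhere. *)

(* Defs.v *)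
From mathcomp Require Import all_boot all_order all_algebra.
Set Implicit Arguments. Unset Strict Implicit. Unset Printing Implicit Defensive.
Import Order.TTheory GRing.Theory Num.Theory.
Local Open Scope ring_scope.

Definition is_mass (R : realFieldType) (T : finType) (m : {set T} -> R) : Prop :=
  m set0 = 0 /\ (forall A, 0 <= m A <= 1) /\ \sum_(A : {set T}) m A = 1.

Definition focal (R : realFieldType) (T : finType) (m : {set T} -> R) : {set {set T}} :=
  [set A | 0 < m A].

Definition disj (R : realFieldType) (T : finType) (m1 m2 : {set T} -> R) : {set T} -> R :=
  fun A => \sum_(B : {set T}) \sum_(C : {set T} | B :|: C == A) m1 B * m2 C.

Definition disj_unit (R : realFieldType) (T : finType) : {set T} -> R :=
  fun A => (A == set0)%:R.

(* n-ary disjunctive combination (associative extension); for n >= 1 the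
   neutral element disj_unit does not change the result. *)
Definition disjn (R : realFieldType) (T : finType) (n : nat)
  (ms : 'I_n -> {set T} -> R) : {set T} -> R :=
  foldr (@disj R T) (@disj_unit R T) [seq ms i | i <- enum 'I_n].

(* The frame X = {T, F} is bool (true = T, false = F); the product
   X_1 x ... x X_n is {ffun 'I_n -> bool}. *)
Definition prodX (n : nat) := {ffun 'I_n -> bool}.

Definition vacuous_ext (R : realFieldType) (n : nat) (i : 'I_n)
  (mi : {set bool} -> R) : {set prodX n} -> R :=
  fun A => \sum_(B : {set bool} | A == [set x : prodX n | x i \in B]) mi B.

(* Main.v *)
Require Import Defs.
From mathcomp Require Import all_boot all_order all_algebra.
From mathcomp Require Import ring lra.
Set Implicit Arguments. Unset Strict Implicit. Unset Printing Implicit Defensive.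
Import Order.TTheory GRing.Theory Num.Theory.
Local Open Scope ring_scope.

Section Gen.
Variable R : realFieldType.

Definition bel (T : finType) (f : {set T} -> R) (A : {set T}) :=
  \sum_(B : {set T} | B \subset A) f B.

Lemma bel0 (T : finType) (f : {set T} -> R) : bel f set0 = f set0.
Proof. rewrite /bel (eq_bigl (fun B => B == set0)); last by move=> B; rewrite subset0.
by rewrite big_pred1_eq. Qed.

Lemma bel_inj (T : finType) (f g : {set T} -> R) :
  (forall A, bel f A = bel g A) -> forall A, f A = g A.
Proof.
move=> H A; have [k hA] : exists k, (#|A| <= k)%N by exists #|A|.
elim: k A hA => [|k IH] A hA.
  by move: hA; rewrite leqn0 cards_eq0 => /eqP ->; rewrite -(bel0 f) -(bel0 g).
have := H A; rewrite /bel (bigD1 A); last exact: subxx.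
rewrite [in RHS](bigD1 A); last exact: subxx.
rewrite (eq_bigr (fun B => g B)); first by move/addIr.
move=> B /andP [sBA nBA]; apply: IH.
have : B \proper A by rewrite properEneq nBA.
by move/proper_card => h; rewrite -ltnS (leq_trans h).
Qed.

Lemma big_sub_eq (I J : finType) (P : pred J) (h : I -> J) (F : I -> R) :
  \sum_(j | P j) \sum_(i | j == h i) F i = \sum_(i | P (h i)) F i.
Proof.
rewrite (exchange_big_dep xpredT) //= [RHS]big_mkcond /=.
apply: eq_bigr => i _; case: (boolP (P (h i))) => Ph.
  by rewrite (big_pred1 (h i)) // => j /=; case: (j =P h i) => [->|_]; rewrite ?andbT ?andbF ?Ph.
by rewrite big_pred0 // => j /=; case: (j =P h i) => [->|_]; rewrite ?andbT ?andbF ?(negbTE Ph).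
Qed.

Lemma big_sub_eq' (I J : finType) (P : pred J) (h : I -> J) (F : I -> R) :
  \sum_(j | P j) \sum_(i | h i == j) F i = \sum_(i | P (h i)) F i.
Proof.
rewrite -big_sub_eq; apply: eq_bigr => j _; apply: eq_bigl => i; exact: eq_sym.
Qed.

Lemma bel_disj (T : finType) (f g : {set T} -> R) A :
  bel (disj f g) A = bel f A * bel g A.
Proof.
rewrite /bel /disj.
under eq_bigr do rewrite pair_big_dep /=.
rewrite (big_sub_eq' (fun B : {set T} => B \subset A) (fun p : {set T} * {set T} => p.1 :|: p.2) (fun p : {set T} * {set T} => f p.1 * g p.2)).
rewrite big_distrlr /= pair_big_dep /=.
by apply: eq_bigl => p; rewrite subUset.
Qed.

Lemma bel_unit (T : finType) A : bel (@disj_unit R T) A = 1.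
Proof.
rewrite /bel (bigD1 set0) ?sub0set //= /disj_unit eqxx big1 ?addr0 //.
by move=> B /andP [_ /negbTE ->].
Qed.

Lemma bel_foldr (T : finType) (l : seq ({set T} -> R)) A :
  bel (foldr (@disj R T) (@disj_unit R T) l) A = \prod_(f <- l) bel f A.
Proof.
elim: l => [|f l IH] /=; first by rewrite big_nil bel_unit.
by rewrite big_cons bel_disj IH.
Qed.

End Gen.

Lemma sum_setbool (R : realFieldType) (G : {set bool} -> R) :
  \sum_(D : {set bool}) G D = G set0 + G [set true] + G [set false] + G setT.
Proof.
pose h (p : bool * bool) : {set bool} := [set x | if x then p.1 else p.2].
pose k (D : {set bool}) := (true \in D, false \in D).
have hb : bijective h.
  exists k; first by move=> [a b]; rewrite /k /h !inE.
  by move=> D; apply/setP => -[]; rewrite inE.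
rewrite (reindex h); last exact: onW_bij.
rewrite -(pair_bigA _ (fun a b => G (h (a, b)))).
rewrite !big_bool.
have -> : h (true, true) = setT by apply/setP => -[]; rewrite !inE.
have -> : h (false, false) = set0 by apply/setP => -[]; rewrite !inE.
have -> : h (true, false) = [set true] by apply/setP => -[]; rewrite !inE.
have -> : h (false, true) = [set false] by apply/setP => -[]; rewrite !inE.
rewrite /=; ring.
Qed.


Section Spec.
Variables (R : realFieldType) (n : nat) (ms : 'I_n -> {set bool} -> R).
Hypothesis Hm : forall i, is_mass (ms i).

Definition Cyl (i : 'I_n) (D : {set bool}) : {set prodX n} := [set x : prodX n | x i \in D].
Definition Pm (x : prodX n) : R := \prod_(i < n) ms i (~: [set x i]).
Definition Sm : R := \sum_(x : prodX n) Pm x.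
Definition mstar (A : {set prodX n}) : R :=
  (if A == setT then 1 - Sm else 0) + \sum_(x | A == ~: [set x]) Pm x.

Lemma bel_vac i A : bel (vacuous_ext i (ms i)) A = \sum_(D | Cyl i D \subset A) ms i D.
Proof. by rewrite /bel /vacuous_ext big_sub_eq. Qed.

Lemma bel_m A : bel (disjn (fun i => vacuous_ext i (ms i))) A =
  \prod_(i < n) \sum_(D | Cyl i D \subset A) ms i D.
Proof.
rewrite /disjn bel_foldr big_map big_enum /=.
by apply: eq_bigr => i _; rewrite bel_vac.
Qed.

Lemma bel_mstar A : bel mstar A =
  (if A == setT then 1 - Sm else 0) + \sum_(x | ~: [set x] \subset A) Pm x.
Proof.
rewrite /bel /mstar big_split /= big_sub_eq; congr (_ + _).
case: (boolP (A == setT)) => [/eqP -> | nA].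
  rewrite (bigD1 setT) ?subsetT //= eqxx big1 ?addr0 //.
  by move=> B /andP [_ /negbTE ->].
apply: big1 => B sBA; case: eqP => // E; move: sBA; rewrite E subTset.
by rewrite (negbTE nA).
Qed.

Lemma neg_setC1 (b : bool) : ~: [set ~~ b] = [set b].
Proof. by apply/setP => c; rewrite !inE; case: b; case: c. Qed.

Definition negf (f : prodX n) : prodX n := [ffun i => ~~ f i].

Lemma negf_inj : injective negf.
Proof. by move=> f g E; apply/ffunP => i; have := congr1 (fun h : prodX n => h i) E; rewrite !ffunE => /negb_inj. Qed.

Lemma negfK : involutive negf.
Proof. by move=> f; apply/ffunP => i; rewrite !ffunE negbK. Qed.

Lemma cond_equiv (f : prodX n) (A : {set prodX n}) :
  [forall i, Cyl i [set f i] \subset A] = (~: [set negf f] \subset A).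
Proof.
apply/forallP/idP => [H | H i].
  apply/subsetP => y; rewrite !inE => hy.
  have : ~~ [forall i, y i == negf f i].
    apply: contra hy => /forallP H'; apply/eqP/ffunP => i; exact/eqP.
  rewrite negb_forall => /existsP [i hi].
  apply: (subsetP (H i)); rewrite !inE; move: hi; rewrite ffunE.
  by case: (y i); case: (f i).
apply/subsetP => x; rewrite !inE => /eqP xi; apply: (subsetP H); rewrite !inE.
apply/eqP => E; have := congr1 (fun g : prodX n => g i) E; rewrite ffunE xi.
by case: (f i).
Qed.

Lemma mass_sum i : ms i set0 + ms i [set true] + ms i [set false] + ms i setT = 1.
Proof. have [_ [_ h]] := Hm i; by rewrite -sum_setbool. Qed.

Lemma m_eq_mstar A : disjn (fun i => vacuous_ext i (ms i)) A = mstar A.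
Proof.
apply: bel_inj => {}A; rewrite bel_m bel_mstar.
case: (boolP (A == setT)) => [/eqP -> | nA].
  rewrite big1; last first.
    move=> i _; under eq_bigl do rewrite subsetT.
    by have [_ [_ h]] := Hm i.
  under eq_bigl do rewrite subsetT.
  by rewrite subrK.
rewrite ?(negbTE nA) add0r.
have step : forall i, \sum_(D | Cyl i D \subset A) ms i D =
    \sum_(b : bool) (if Cyl i [set b] \subset A then ms i [set b] else 0).
  move=> i; rewrite big_mkcond sum_setbool big_bool /=.
  have [h0 _] := Hm i.
  have -> : Cyl i setT = setT by apply/setP => x; rewrite !inE.
  by rewrite subTset (negbTE nA) h0; repeat (case: ifP => _); ring.
under eq_bigr do rewrite step.
rewrite bigA_distr_bigA /=.
rewrite (reindex_inj negf_inj) /= [RHS]big_mkcond /=.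
apply: eq_bigr => f _.
have -> : [set~ f] = [set~ negf (negf f)] by rewrite negfK.
rewrite -cond_equiv; case: (boolP [forall i, _]) => [/forallP H | ].
  rewrite /Pm; apply: eq_bigr => i _; rewrite H ffunE.
  by rewrite -{2}(negbK (f i)) neg_setC1.
rewrite negb_forall => /existsP [i hi].
by rewrite (bigD1 i) //= (negbTE hi) mul0r.
Qed.

End Spec.

Lemma setC1_neqT (n : nat) (x : prodX n) : ~: [set x] != setT.
Proof. apply/eqP => E; have := in_setT x; by rewrite -E !inE eqxx. Qed.

Unset Implicit Arguments.

Theorem lemma2 (R : realFieldType) (n : nat) (ms : 'I_n -> {set bool} -> R) :
  (0 < n)%N ->
  (forall i, is_mass (ms i)) ->
  let m := disjn (fun i => vacuous_ext i (ms i)) in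
  [/\ (forall x : prodX n, m (~: [set x]) = \prod_(i < n) ms i (~: [set x i])),
      m setT = 1 - \sum_(x : prodX n) \prod_(i < n) ms i (~: [set x i]),
      (forall A : {set prodX n}, A != setT -> (forall x, A != ~: [set x]) -> m A = 0)
    & ((forall i, 0 < ms i [set true] /\ 0 < ms i [set false] /\ 0 < ms i setT) ->
       focal m = setT |: [set ~: [set x] | x : prodX n]
       /\ #|focal m| = (2 ^ n).+1)].
Proof.
move=> n0 Hm m.
have Em : forall A, m A = mstar ms A by move=> A; exact: m_eq_mstar.
have Ex : forall x, m (~: [set x]) = Pm ms x.
  move=> x; rewrite Em /mstar (negbTE (setC1_neqT x)) add0r.
  rewrite (big_pred1 x) // => y /=.
  by rewrite (inj_eq (@setC_inj _)) (inj_eq (@set1_inj _)) eq_sym.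
have ET : m setT = 1 - Sm ms.
  rewrite Em /mstar eqxx big_pred0 ?addr0 // => y /=.
  by rewrite eq_sym (negbTE (setC1_neqT y)).
have E0 : forall A : {set prodX n}, A != setT -> (forall x, A != ~: [set x]) -> m A = 0.
  move=> A nA nx; rewrite Em /mstar (negbTE nA) add0r big_pred0 // => y /=.
  exact: negbTE.
split => // Hpos.
have S_lt1 : Sm ms < 1.
  rewrite /Sm /Pm.
  rewrite -(bigA_distr_bigA (fun i (b : bool) => ms i (~: [set b]))) /=.
  have F : forall i, \sum_(b : bool) ms i (~: [set b]) = 1 - ms i setT.
    move=> i; rewrite big_bool /=.
    have -> : ~: [set true] = [set false] by apply/setP => -[]; rewrite !inE.
    have -> : ~: [set false] = [set true] by apply/setP => -[]; rewrite !inE.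
    have := mass_sum Hm i; have [h0 _] := Hm i; rewrite h0 => h; lra.
  have i0 : 'I_n := Ordinal n0.
  rewrite (bigD1 i0) //= F.
  have [_ [_ hT]] := Hpos i0.
  apply: (@le_lt_trans _ _ (1 - ms i0 setT)); last by lra.
  apply: ler_piMr.
    have := mass_sum Hm i0; have [h0 [hb _]] := Hm i0.
    have := hb [set true]; have := hb [set false]; rewrite h0 => /andP[? ?] /andP[? ?]; lra.
  apply: prodr_ile1 => i _; rewrite F; have [_ [hb _]] := Hm i.
  have := hb setT => /andP [? ?]; apply/andP; split; lra.
have Ef : focal m = setT |: [set ~: [set x] | x : prodX n].
  apply/setP => A; rewrite /focal !inE.
  case: (boolP (A == setT)) => [/eqP -> | nA] /=.
    by rewrite ET subr_gt0.
  case: (pickP (fun x => A == ~: [set x])) => [x /eqP -> | hx].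
    rewrite Ex.
    have -> : ~: [set x] \in [set ~: [set y] | y : prodX n] by apply/imsetP; exists x.
    rewrite /Pm; apply: prodr_gt0 => i _.
    have [h1 [h2 _]] := Hpos i.
    have -> : ~: [set x i] = [set ~~ x i] by rewrite -(neg_setC1 (~~ x i)) negbK.
    by case: (x i).
  rewrite E0 ?ltxx //; last by move=> x; rewrite hx.
  by apply/esym/imsetP => -[x _ /eqP]; rewrite hx.
split => //.
rewrite Ef cardsU1 card_imset; last by move=> x y /(@setC_inj _) /(@set1_inj _).
have -> : setT \notin [set ~: [set x] | x : prodX n].
  by apply/imsetP => -[x _ E]; move: (setC1_neqT x); rewrite -E eqxx.
by rewrite cardT /= -cardE card_ffun card_bool card_ord.
Qed.
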